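(* Assume conditions (C1) and (C2) stated in the context. Then the maps \[ (R^\star,R)\mapsto\mathcal G_{R^\star}(R)\qquad\text{and}\qquad(R^\star,R)\mapsto\mathcal L_{R^\star}(R)-\mathcal L_{R^\star}(R^\star) \] are continuous on $\mathcal F_{\mathcal P}^2$ (with the product topology of $\|\cdot\|_{\infty,\mathrm{supp}(\pi_0)}$).
   Context: $\mathcal X$ is a measurable space with distribution $d_0$; $\mathcal A$ is a separable metric space; $\pi_0:\mathcal X\to\Delta(\mathcal A)$ a Markov kernel, $S_x:=\mathrm{supp}(\pi_0(\cdot\mid x))$ its topological support, $\|f\|_{\infty,\mathrm{supp}(\pi_0)}:=\sup\{|f(x,a)|:x\in\mathcal X,a\in S_x\}$. A fixed measurable tie-breaking rule assigns to each measurable reward $R$ a measurable $a_R$ with $a_R(x)\in\arg\max_{a\in S_x}R(x,a)$. $\mathcal P$ is a set; each $p$ induces a $\pi_0$-centered (i.e. $\int R_p(x,a)\pi_0(da\mid x)=0$ for all $x$) measurable reward $R_p$; $\mathcal F_{\mathcal P}:=\{R_p:p\in\mathcal P\}$. (C1) $\mathcal F_{\mathcal P}$ is compact under $\|\cdot\|_{\infty,\mathrm{supp}(\pi_0)}$, and every $R\in\mathcal F_{\mathcal P}$ has $a\mapsto R(x,a)$ continuous on $S_x$ for $d_0$-a.e. $x$. (C2) There is $\Delta^{\mathcal P}_{\min}>0$ such that for every $p$, $d_0$-a.s., $a_{R_p}(X)$ is the unique maximizer and $R_p(X,a_{R_p}(X))-\sup_{a\in S_X,a\ne a_{R_p}(X)}R_p(X,a)\ge\Delta^{\mathcal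 P}_{\min}$. $K\ge2$; $\mathbf v_R(x,\mathbf a)=(R(x,a_1),\dots,R(x,a_K))$; $P_R(y=k\mid x,\mathbf a)=e^{R(x,a_k)}/\sum_\ell e^{R(x,a_\ell)}$; $\ell(\mathbf v,y)=\log\sum_ke^{v_k}-v_y$. For a truth reward $R^\star\in\mathcal F_{\mathcal P}$: $\mathcal G_{R^\star}(R):=\mathbb E_{X\sim d_0}[R^\star(X,a_{R^\star}(X))-R^\star(X,a_R(X))]$ and $\mathcal L_{R^\star}(R):=\mathbb E[\ell(\mathbf v_R(X,\mathbf A),Y)]$ with $X\sim d_0$, $\mathbf A\sim\pi_0(\cdot\mid X)^{\otimes K}$, $Y\sim P_{R^\star}(\cdot\mid X,\mathbf A)$. *)

(* Defs.v *)
From HB Require Import structures.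
From mathcomp Require Import all_boot all_order all_algebra.
From mathcomp Require Import all_classical all_reals all_analysis.
Set Implicit Arguments. Unset Strict Implicit. Unset Printing Implicit Defensive.
Import Order.TTheory GRing.Theory Num.Theory.
Import numFieldNormedType.Exports.
Local Open Scope classical_set_scope.
Local Open Scope ring_scope.

Notation borelT A := (g_sigma_algebraType (@open A)).

Section Defs.
Context {R : realType} {dX : measure_display} {X : measurableType dX}
  {A : pseudoPMetricType R}.

Definition tsupp (mu : {measure set (borelT A) -> \bar R}) : set A :=
  [set a | forall U : set A, open U -> U a -> (0 < mu U)%E].

Definition supnorm (S : X -> set A) (f : X -> A -> R) : \bar R :=
  ereal_sup [set y | exists x a, S x a /\ y = (`|f x a|)%:E].

Definition fsub (f g : X -> A -> R) : X -> A -> R := fun x a => f x a - g x a.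

Definition supopen (S : X -> set A) (U : set (X -> A -> R)) :=
  forall f, U f -> exists2 e : R, 0 < e &
    forall g, (supnorm S (fsub g f) < e%:E)%E -> U g.

Definition supcompact (S : X -> set A) (F : set (X -> A -> R)) :=
  forall (I : Type) (U : I -> set (X -> A -> R)),
    (forall i, supopen S (U i)) -> F `<=` \bigcup_(i in setT) U i ->
    exists2 J : set I, finite_set J & F `<=` \bigcup_(i in J) U i.

(* iterated integral over K i.i.d. draws from mu (K-fold product) *)
Fixpoint iint (n : nat) (mu : {measure set (borelT A) -> \bar R})
    (f : seq A -> \bar R) : \bar R :=
  match n with
  | 0 => f [::]
  | n'.+1 => (\int[mu]_(a in setT) iint n' mu (fun s => f (a :: s)))%E
  end.

Definition vR (Rf : X -> A -> R) (x : X) (s : seq A) (k : nat) : R :=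
  Rf x (nth point s k).

Definition lse (K : nat) (v : nat -> R) : R := ln (\sum_(k < K) expR (v k)).
Definition loss (K : nat) (v : nat -> R) (y : nat) : R := lse K v - v y.
(* Bradley-Terry / Plackett-Luce choice probability P(y = k | x, a) *)
Definition softmax (K : nat) (v : nat -> R) (y : nat) : R :=
  expR (v y) / \sum_(l < K) expR (v l).

(* L_{Rs}(Rf) = E[ l(v_Rf(X,A), Y) ],  X ~ d0, A ~ pi0(.|X)^{(x)K}, Y ~ P_Rs *)
Definition Lrisk (d0 : probability X R) (pi0 : R.-pker X ~> borelT A) (K : nat)
    (Rs Rf : X -> A -> R) : \bar R :=
  (\int[d0]_(x in setT) iint K (pi0 x)
     (fun s => (\sum_(k < K) softmax K (vR Rs x s) k
                              * loss K (vR Rf x s) k)%:E))%E.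

Definition Gap (d0 : probability X R) (tb : (X -> A -> R) -> X -> A)
    (Rs Rf : X -> A -> R) : \bar R :=
  (\int[d0]_(x in setT) (Rs x (tb Rs x) - Rs x (tb Rf x))%:E)%E.

End Defs.

(* Main.v *)
Require Import Defs.
From HB Require Import structures.
From mathcomp Require Import all_boot all_order all_algebra.
From mathcomp Require Import all_classical all_reals all_analysis.
From mathcomp Require Import measurable_realfun lebesgue_integral kernel.
From mathcomp Require Import ring lra.
Import Order.TTheory GRing.Theory Num.Theory.
Import numFieldNormedType.Exports.
Local Open Scope classical_set_scope.
Local Open Scope ring_scope.
Lemma open_meas (R : realType) (A : pseudoPMetricType R) (U : set A) :
  open U -> measurable (U : set (borelT A)).
Proof. by move=> oU; apply: sub_sigma_algebra. Qed.

Lemma supp_ae (R : realType) (A : pseudoPMetricType R)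
  (Asep : exists D : set A, countable D /\ dense D)
  (mu : {measure set (borelT A) -> \bar R}) :
  {ae mu, forall a, tsupp mu a}.
Proof.
case: Asep => D [/countable_injP [f finj] Dd].
pose r (m : nat) : R := (m.+1%:R)^-1.
have r0 m : 0 < r m by rewrite invr_gt0.
pose Pex n m (U : set A) := [/\ open U, mu U = 0%E &
   exists d, [/\ D d, f d = n & ball d (r m) `<=` U]].
pose E n m : set A := match pselect (exists U, Pex n m U) with
  | left h => projT1 (cid h) | right _ => set0 end.
have hE n m : {ae mu, forall a, ~ E n m a}.
  exists (E n m); rewrite /E; case: pselect => [h|_].
    case: (cid h) => U [oU mU _] /=; split => //; first exact: open_meas.
    by move=> a /= /contrapT.
  split => //; by move=> a /= /contrapT.
have := ae_foralln (fun n => ae_foralln (hE n)).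
apply: filterS => a H U oU Ua.
rewrite lt0e measure_ge0 andbT; apply/eqP => mu0.
have /nbhs_ballP [e e0 subU] : nbhs a U by apply: open_nbhs_nbhs.
have [m _ /(_ m (leqnn _)) hm] := near_infty_natSinv_lt (PosNum (divr_gt0 e0 (ltr0Sn R 1))).
have [d [/interior_subset ad Dd']] : ((ball a (r m))° `&` D) !=set0.
  apply: Dd; last exact: open_interior.
  by exists a; exact: nbhsx_ballx.
have bdU : ball d (r m) `<=` U.
  move=> y dy; apply: subU; apply: (@le_ball _ _ _ (r m + r m)).
    rewrite -mulr2n -mulr_natr; move: hm => /=; rewrite /r => hm.
    by rewrite -ler_pdivlMr ?ltr0Sn //; apply: ltW.
  exact: ball_triangle ad dy.
have ex : exists U, Pex (f d) m U by exists U; split => //; exists d.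
apply: (H (f d) m); rewrite /E; case: pselect => [h|//].
case: (cid h) => V [_ _ [d' [Dd'' fd' sV]]] /=.
have dd : d' = d by apply: finj; rewrite ?inE.
by apply: sV; rewrite dd; apply: ball_sym.
Qed.
Local Open Scope ereal_scope.
Section kfst.
Context d d' dB (Z : measurableType d) (Y : measurableType d') (B : measurableType dB) (R : realType).
Variable k : R.-pker Z ~> Y.
Definition kfst (zb : Z * B) : {measure set Y -> \bar R} := k zb.1.
Lemma kfst_meas U : measurable U -> measurable_fun [set: Z * B] (kfst ^~ U).
Proof.
move=> mU; exact: (measurableT_comp (measurable_kernel k U mU) measurable_fst).
Qed.
HB.instance Definition _ := isKernel.Build _ _ _ _ R kfst kfst_meas.
Lemma kfst_prob zb : kfst zb [set: Y] = 1.
Proof. exact: prob_kernel. Qed.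
HB.instance Definition _ := Kernel_isProbability.Build _ _ _ _ R kfst kfst_prob.
End kfst.
Arguments kfst {d d' dB Z Y} B {R} k.

Section iint.
Context (R : realType) (A : pseudoPMetricType R).

Fixpoint Good (n : nat) : forall d (Z : measurableType d), (Z -> seq A -> \bar R) -> Prop :=
  match n with
  | 0 => fun d Z h => measurable_fun [set: Z] (fun z => h z [::])
  | n'.+1 => fun d Z h => @Good n' _ (Z * borelT A)%type (fun za s => h za.1 (za.2 :: s))
  end.
Arguments Good n {d Z} h.

Lemma iint_ge0 n (mu : {measure set (borelT A) -> \bar R}) f :
  (forall s, 0 <= f s) -> 0 <= iint n mu f.
Proof.
elim: n f => [|n IH] f f0 /=; first exact: f0.
by apply: integral_ge0 => a _; apply: IH.
Qed.

Lemma iint_meas n : forall d (Z : measurableType d) (k : R.-pker Z ~> borelT A)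
  (h : Z -> seq A -> \bar R), (forall z s, 0 <= h z s) -> Good n h ->
  measurable_fun [set: Z] (fun z => iint n (k z) (h z)).
Proof.
elim: n => [|n IH] d Z k h h0 /= hg; first exact: hg.
have := IH _ _ (kfst (borelT A) k) (fun za s => h za.1 (za.2 :: s)) (fun _ _ => h0 _ _) hg.
move=> mG.
apply: (measurable_fun_integral_finite_kernel
  (fun za : Z * borelT A => iint n (k za.1) (fun s => h za.1 (za.2 :: s))) k) => //.
by move=> za; apply: iint_ge0.
Qed.

Fixpoint allin (S : set A) (s : seq A) : Prop :=
  match s with [::] => True | a :: s' => S a /\ allin S s' end.

Lemma iint_le n : forall d (Z : measurableType d) (k : R.-pker Z ~> borelT A)
  (S : Z -> set A) (h1 h2 : Z -> seq A -> \bar R) (c : R),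
  (0 <= c)%R -> (forall z, {ae k z, forall a, S z a}) ->
  (forall z s, 0 <= h1 z s) -> (forall z s, 0 <= h2 z s) ->
  Good n h1 -> Good n h2 ->
  forall z, (forall s, size s = n -> allin (S z) s -> h1 z s <= h2 z s + c%:E) ->
  iint n (k z) (h1 z) <= iint n (k z) (h2 z) + c%:E.
Proof.
elim: n => [|n IH] d Z k S h1 h2 c c0 Sae h10 h20 g1 g2 z Hz /=.
  exact: Hz.
have mG1 := measurableT_comp (@iint_meas n _ _ (kfst (borelT A) k)
   (fun za s => h1 za.1 (za.2 :: s)) (fun _ _ => h10 _ _) g1) (pair1_measurable z).
have mG2 := measurableT_comp (@iint_meas n _ _ (kfst (borelT A) k)
   (fun za s => h2 za.1 (za.2 :: s)) (fun _ _ => h20 _ _) g2) (pair1_measurable z).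
rewrite /comp /= in mG1 mG2.
apply: le_trans.
  apply: (@ae_ge0_le_integral _ _ _ (k z) setT measurableT _
     (fun a => iint n (k z) (fun s => h2 z (a :: s)) + c%:E)) => //.
  - by move=> a _; apply: iint_ge0.
  - by move=> a _; apply: adde_ge0; [apply: iint_ge0|rewrite lee_fin].
  - by apply: emeasurable_funD => //; exact: measurable_cst.
  have FF := @ae_filter_ringOfSetsType _ _ R (k z).
  have := Sae z; apply: filterS => a Sa _.
  apply: (IH _ _ (kfst (borelT A) k) (fun za => S za.1)
     (fun za s => h1 za.1 (za.2 :: s)) (fun za s => h2 za.1 (za.2 :: s)) c c0
     (fun za => Sae za.1) (fun _ _ => h10 _ _) (fun _ _ => h20 _ _) g1 g2 (z, a)).
  by move=> s sz Ss; apply: Hz => /=; rewrite ?sz.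
rewrite ge0_integralD //.
- by rewrite integral_cst // prob_kernel mule1.
- by move=> a _; apply: iint_ge0.
Qed.

Lemma Good0 n : forall d (Z : measurableType d), Good n (fun (_ : Z) (_ : seq A) => 0 : \bar R).
Proof. elim: n => [|n IH] d Z /=; [exact: measurable_cst| exact: IH]. Qed.

Lemma iint0 n (mu : {measure set (borelT A) -> \bar R}) : iint n mu (fun _ => 0) = 0.
Proof. elim: n => [|n IH] //=; under eq_integral do rewrite IH; exact: integral0. Qed.
End iint.
Arguments Good {R A} n {d Z} h.
Arguments allin {R A} S s.
Local Close Scope ereal_scope.
Lemma meas_comb (R : realType) d (Z : measurableType d) (K : nat) (K0 : (0 < K)%N)
  (u w : nat -> Z -> R) :
  (forall k, measurable_fun [set: Z] (u k)) -> (forall k, measurable_fun [set: Z] (w k)) ->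
  measurable_fun [set: Z] (fun z => \sum_(k < K) softmax K (fun k => u k z) k * loss K (fun k => w k z) k).
Proof.
move=> mu mw.
apply: measurable_sum => k.
apply: measurable_funM.
  rewrite /softmax.
  have -> : (fun z => expR (u k z) / \sum_(l < K) expR (u l z)) =
     (fun z => expR (u k z) * expR (- ln (\sum_(l < K) expR (u l z)))).
    apply/funext => z; rewrite expRN lnK // posrE.
    rewrite (bigD1 (Ordinal K0)) //= ltr_pwDl ?expR_gt0 // sumr_ge0 // => i _.
  apply: measurable_funM; first by apply: measurableT_comp; [exact: measurable_expR|exact: (mu k)].
  apply: measurableT_comp; first exact: measurable_expR.
  apply: measurable_funN.
  apply: measurableT_comp; first exact: measurable_ln.
  apply: measurable_sum => l.
  by apply: measurableT_comp; [exact: measurable_expR|exact: (mu l)].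
rewrite /loss /lse.
apply: measurable_funB; last exact: mw.
apply: measurableT_comp; first exact: measurable_ln.
apply: measurable_sum => l.
by apply: measurableT_comp; [exact: measurable_expR|exact: (mw l)].
Qed.

Local Close Scope ereal_scope.
Section goodH.
Context (R : realType) (A : pseudoPMetricType R) (dX : measure_display) (X : measurableType dX).
Variable H : X -> seq A -> \bar R.
Hypothesis Hm : forall d (Z : measurableType d) (xz : Z -> X) (pre : Z -> seq A),
  measurable_fun [set: Z] xz ->
  (forall k, measurable_fun [set: Z] (fun z => nth point (pre z) k : borelT A)) ->
  measurable_fun [set: Z] (fun z => H (xz z) (pre z)).

Lemma goodH n : forall d (Z : measurableType d) (xz : Z -> X) (pre : Z -> seq A) m,
  (forall z, size (pre z) = m) -> measurable_fun [set: Z] xz ->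
  (forall k, measurable_fun [set: Z] (fun z => nth point (pre z) k : borelT A)) ->
  Good n (fun z s => H (xz z) (pre z ++ s)).
Proof.
elim: n => [|n IH] d Z xz pre m sz mxz mpre /=.
  under eq_fun do rewrite cats0.
  exact: Hm.
have -> : (fun (za : Z * borelT A) s => H (xz za.1) (pre za.1 ++ za.2 :: s)) =
   (fun za s => H (xz za.1) (rcons (pre za.1) za.2 ++ s)).
  by apply/funext => za; apply/funext => s; rewrite cat_rcons.
refine (IH _ (Z * borelT A)%type (fun za => xz za.1) (fun za => rcons (pre za.1) za.2 : seq A) m.+1 _ _ _).
- by move=> za; rewrite size_rcons sz.
- by apply: measurableT_comp => //; exact: measurable_fst.
move=> k; have [km|km] := ltnP k m.
  rewrite (_ : (fun _ => _) = (fun za : Z * borelT A => nth point (pre za.1) k)); last first.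
    by apply/funext => za; rewrite nth_rcons sz km.
  by apply: (measurableT_comp (mpre k)); exact: measurable_fst.
have [->|km'] := eqVneq k m.
  rewrite (_ : (fun _ => _) = (fun za : Z * borelT A => za.2)); last first.
    by apply/funext => za; rewrite nth_rcons sz ltnn eqxx.
  exact: measurable_snd.
rewrite (_ : (fun _ => _) = (fun za : Z * borelT A => point)); last first.
  by apply/funext => za; rewrite nth_rcons sz ltnNge km /= (negbTE km').
exact: measurable_cst.
Qed.
End goodH.

Local Open Scope ereal_scope.
Lemma int_le_cst {d} {T : measurableType d} {R : realType} (mu : probability T R)
  (f g : T -> \bar R) (c : R) :
  measurable_fun setT f -> measurable_fun setT g -> (forall x, 0 <= f x) ->
  (forall x, 0 <= g x) -> (0 <= c)%R -> {ae mu, forall x, f x <= g x + c%:E} ->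
  \int[mu]_(x in setT) f x <= \int[mu]_(x in setT) g x + c%:E.
Proof.
move=> mf mg f0 g0 c0 H.
apply: le_trans.
  apply: (@ae_ge0_le_integral _ _ _ mu setT measurableT _ (fun x => g x + c%:E)) => //.
  - by move=> x _; apply: adde_ge0; rewrite ?lee_fin.
  - by apply: emeasurable_funD => //; exact: measurable_cst.
  have FF := @ae_filter_ringOfSetsType _ _ R mu.
  by move: H; apply: filterS => x + _.
rewrite ge0_integralD //.
  by rewrite integral_cst // [X in _ * X](_ : _ = 1) ?mule1 //; exact: probability_setT.
Qed.

Lemma int_close d (T : measurableType d) (R : realType) (mu : probability T R)
  (f g : T -> \bar R) (C c : R) :
  measurable_fun setT f -> measurable_fun setT g -> (forall x, 0 <= f x) ->
  (forall x, 0 <= g x) -> (forall x, f x <= C%:E) -> (forall x, g x <= C%:E) ->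
  (0 <= c)%R -> {ae mu, forall x, f x <= g x + c%:E} -> {ae mu, forall x, g x <= f x + c%:E} ->
  (`| fine (\int[mu]_(x in setT) f x) - fine (\int[mu]_(x in setT) g x)| <= c)%R.
Proof.
move=> mf mg f0 g0 fC gC c0 H1 H2.
have C0 : (0 <= C)%R by rewrite -lee_fin; apply: le_trans (fC point); exact: f0.
have bnd h : measurable_fun setT h -> (forall x, 0 <= h x) -> (forall x, h x <= C%:E) ->
   \int[mu]_(x in setT) h x \is a fin_num.
  move=> mh h0 hC; rewrite ge0_fin_numE; last by apply: integral_ge0.
  have H : {ae mu, forall x, h x <= (fun _ => 0) x + C%:E}.
    by apply: aeW => x; rewrite add0e.
  have := @int_le_cst _ _ _ mu h (fun _ => 0) C mh (measurable_cst _) h0 (fun _ => lexx _) C0 H.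
  rewrite integral0 add0e => H'; apply: le_lt_trans H' _.
  exact: ltry.
have F1 := bnd _ mf f0 fC; have F2 := bnd _ mg g0 gC.
have L1 := @int_le_cst _ _ _ mu _ _ _ mf mg f0 g0 c0 H1.
have L2 := @int_le_cst _ _ _ mu _ _ _ mg mf g0 f0 c0 H2.
rewrite -(fineK F1) -(fineK F2) -EFinD lee_fin in L1.
rewrite -(fineK F1) -(fineK F2) -EFinD lee_fin in L2.
rewrite ler_norml; apply/andP; split.
  lra.
lra.
Qed.

Local Close Scope ereal_scope.
Section analytic.
Context (R : realType) (K : nat) (K0 : (0 < K)%N).

Lemma sumexp_gt0 (v : nat -> R) : 0 < \sum_(l < K) expR (v l).
Proof.
by rewrite (bigD1 (Ordinal K0)) //= ltr_pwDl ?expR_gt0 // sumr_ge0 // => i _.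
Qed.

Lemma lse_le (v v' : nat -> R) t :
  (forall k, (k < K)%N -> v' k <= v k + t) -> lse K v' <= lse K v + t.
Proof.
move=> H; rewrite /lse.
have -> : lse K v + t = ln ((\sum_(l < K) expR (v l)) * expR t) by
  rewrite lnM ?posrE ?sumexp_gt0 ?expR_gt0 // expRK.
rewrite ler_ln ?posrE ?sumexp_gt0 ?mulr_gt0 ?sumexp_gt0 ?expR_gt0 //.
rewrite mulr_suml; apply: ler_sum => i _; rewrite -expRD ler_expR; exact: H.
Qed.

Lemma lse_close (v v' : nat -> R) t :
  (forall k, (k < K)%N -> `|v' k - v k| <= t) -> `|lse K v' - lse K v| <= t.
Proof.
move=> H.
have a : lse K v' <= lse K v + t.
  apply: lse_le => k kK.
  by have := H k kK; rewrite ler_norml => /andP[h1 h2]; lra.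
have b : lse K v <= lse K v' + t.
  apply: lse_le => k kK.
  by have := H k kK; rewrite ler_norml => /andP[h1 h2]; lra.
rewrite ler_norml; apply/andP; split; lra.
Qed.

Lemma softmax_ge0 (u : nat -> R) k : 0 <= softmax K u k.
Proof. by rewrite /softmax divr_ge0 ?expR_ge0 // ltW // sumexp_gt0. Qed.

Lemma sum_softmax (u : nat -> R) : \sum_(k < K) softmax K u k = 1.
Proof.
rewrite /softmax -mulr_suml divff //; exact: lt0r_neq0 (sumexp_gt0 u).
Qed.

Lemma softmax_ratio (u u' : nat -> R) t k :
  (forall k, (k < K)%N -> `|u' k - u k| <= t) -> (k < K)%N ->
  softmax K u' k <= expR (2 * t) * softmax K u k.
Proof.
move=> H kK; rewrite /softmax.
have Su := sumexp_gt0 u; have Su' := sumexp_gt0 u'.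
have h1 : expR (u' k) <= expR t * expR (u k).
  rewrite -expRD ler_expR; have := H k kK; rewrite ler_norml => /andP[]; lra.
have h2 : expR (- t) * \sum_(l < K) expR (u l) <= \sum_(l < K) expR (u' l).
  rewrite mulr_sumr; apply: ler_sum => i _; rewrite -expRD ler_expR.
  have := H i (ltn_ord i); rewrite ler_norml => /andP[]; lra.
rewrite ler_pdivrMr //.
apply: (le_trans h1).
have -> : expR (2 * t) * (expR (u k) / \sum_(l < K) expR (u l)) * \sum_(l < K) expR (u' l)
   = expR t * expR (u k) * (expR t * ((\sum_(l < K) expR (u' l)) / \sum_(l < K) expR (u l))).
  by rewrite (_ : 2 * t = t + t) ?expRD; ring.
rewrite ler_peMr ?mulr_ge0 ?expR_ge0 //.
rewrite mulrA ler_pdivlMr // mul1r.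
have := ler_wpM2l (expR_ge0 t) h2.
by rewrite mulrA -expRD subrr expR0 mul1r.

Qed.

Lemma expR2_bound (t : R) : 0 <= t -> t <= 1/4 -> expR (2 * t) - 1 <= 4 * t.
Proof.
move=> t0 t1.
have e1 : expR (2 * t) * expR (- (2 * t)) = 1 by rewrite -expRD subrr expR0.
have e2 := expR_ge1Dx (- (2 * t)).
have e3 := expR_gt0 (2 * t).
have e4 : expR (2 * t) * (1 - 2 * t) <= 1.
  apply: (le_trans (y := expR (2*t) * expR (-(2*t)))); last by rewrite e1.
  apply: ler_wpM2l; [exact: ltW|lra].
nra.
Qed.

Definition Phi (u w : nat -> R) := \sum_(k < K) softmax K u k * loss K w k.

Lemma PhiE u w : Phi u w = lse K w - \sum_(k < K) softmax K u k * w k.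
Proof.
rewrite /Phi /loss.
under eq_bigr do rewrite mulrBr.
by rewrite sumrB -mulr_suml sum_softmax mul1r.
Qed.

Lemma Phi_close (u u' w w' : nat -> R) t M :
  0 <= t -> t <= 1/4 ->
  (forall k, (k < K)%N -> `|u' k - u k| <= t) ->
  (forall k, (k < K)%N -> `|w' k - w k| <= t) ->
  (forall k, (k < K)%N -> `|w k| <= M) ->
  `|Phi u' w' - Phi u w| <= t * (4 + 8 * M).
Proof.
move=> t0 t1 Hu Hw HM.
have M0 : 0 <= M by apply: le_trans (normr_ge0 _) (HM 0%N K0).
have HE := @expR2_bound t t0 t1.
set E := expR (2 * t) in HE.
have E0 : 0 <= E by exact: expR_ge0.
have Hu' : forall k, (k < K)%N -> `|u k - u' k| <= t by move=> k kK; rewrite distrC; exact: Hu.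
rewrite !PhiE.
have -> : lse K w' - \sum_(k < K) softmax K u' k * w' k -
    (lse K w - \sum_(k < K) softmax K u k * w k) =
    (lse K w' - lse K w) - \sum_(k < K) ((softmax K u' k - softmax K u k) * w' k
        + softmax K u k * (w' k - w k)).
  rewrite big_split /=.
  have e1 : \sum_(k < K) (softmax K u' k - softmax K u k) * w' k =
     \sum_(k < K) softmax K u' k * w' k - \sum_(k < K) softmax K u k * w' k.
    by rewrite -sumrB; apply: eq_bigr => i _; rewrite mulrBl.
  have e2 : \sum_(k < K) softmax K u k * (w' k - w k) =
     \sum_(k < K) softmax K u k * w' k - \sum_(k < K) softmax K u k * w k.
    by rewrite -sumrB; apply: eq_bigr => i _; rewrite mulrBr.
  rewrite e1 e2; ring.
apply: (le_trans (ler_normB _ _)).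
have L1 := @lse_close w w' t Hw.
suff L2 : `|\sum_(k < K) ((softmax K u' k - softmax K u k) * w' k
        + softmax K u k * (w' k - w k))| <= 2 * (E - 1) * (M + t) + t.
  have Mt : 0 <= M + t by lra.
  have : 2 * (E - 1) * (M + t) <= 8 * t * (M + t) by nra.
  move: L1 L2; nra.
apply: (le_trans (ler_norm_sum _ _ _)).
apply: le_trans.
  apply: (ler_sum _ (G := fun k : 'I_K => (E - 1) * (M + t) * (softmax K u k + softmax K u' k) + softmax K u k * t)).
  move=> k _.
  apply: (le_trans (ler_normD _ _)); apply: lerD.
    have wk : `|w' k| <= M + t.
      have := Hw k (ltn_ord k); have := HM k (ltn_ord k).
      have := ler_normD (w' k - w k) (w k); rewrite subrK; lra.
    have r1 := @softmax_ratio u u' t k Hu (ltn_ord k).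
    have r2 := @softmax_ratio u' u t k Hu' (ltn_ord k).
    have s1 := softmax_ge0 u k; have s2 := softmax_ge0 u' k.
    rewrite -/E in r1 r2.
    have E1 : 1 <= E by rewrite /E; have := expR_ge1Dx (2 * t); lra.
    have sk : `|softmax K u' k - softmax K u k| <=
       (E - 1) * (softmax K u k + softmax K u' k).
      rewrite ler_norml; apply/andP; split; nra.
    rewrite normrM; apply: le_trans (ler_pM (normr_ge0 _) (normr_ge0 _) sk wk) _.
    by rewrite (_ : (E - 1) * (M + t) * (softmax K u k + softmax K u' k) =
      (E - 1) * (softmax K u k + softmax K u' k) * (M + t)) //; ring.
  rewrite normrM ger0_norm ?softmax_ge0 // ler_wpM2l ?softmax_ge0 //; exact: Hw.
rewrite big_split /= -mulr_sumr -mulr_suml big_split /= !sum_softmax.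
lra.
Qed.
End analytic.

Local Open Scope ereal_scope.
Lemma supnorm_lt (R : realType) d (X : measurableType d) (A : pseudoPMetricType R)
  (S : X -> set A) (f : X -> A -> R) (dl : R) x a :
  supnorm S f < dl%:E -> S x a -> (`|f x a| < dl)%R.
Proof.
move=> H Sxa; rewrite -lte_fin; apply: le_lt_trans H.
by apply: ereal_sup_ubound; exists x, a.
Qed.

Lemma supnorm_le (R : realType) d (X : measurableType d) (A : pseudoPMetricType R)
  (S : X -> set A) (f : X -> A -> R) x a :
  supnorm S f < +oo -> S x a -> (`|f x a| <= fine (supnorm S f))%R.
Proof.
move=> H Sxa.
have ub : (`|f x a|)%:E <= supnorm S f by apply: ereal_sup_ubound; exists x, a.
have fin : supnorm S f \is a fin_num.
  rewrite fin_numE; apply/andP; split; last by rewrite lt_eqF.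
  by apply/negP => /eqP e; rewrite e leeNy_eq in ub.
by rewrite -lee_fin fineK.
Qed.
Local Close Scope ereal_scope.

Lemma loss_ge0 (R : realType) K (w : nat -> R) k : (k < K)%N -> 0 <= loss K w k.
Proof.
move=> kK; rewrite /loss /lse subr_ge0.
rewrite -{1}(expRK (w k)) ler_ln ?posrE ?expR_gt0 ?sumexp_gt0 //; last exact: (leq_ltn_trans (leq0n k)).
rewrite (bigD1 (Ordinal kK)) //= lerDl sumr_ge0 // => i _; exact: expR_ge0.
Qed.

Lemma allin_nth (R : realType) (A : pseudoPMetricType R) (S : set A) l k :
  allin S l -> (k < size l)%N -> S (nth point l k).
Proof.
elim: l k => [|a l IH] [|k] //= [Sa Sl] kl; first exact: Sa.
exact: IH.
Qed.

Lemma tb_same (R : realType) (A : pseudoPMetricType R) (Sx : set A) (f g : A -> R)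
  (t t' : A) (dl Dmin : R) :
  dl <= Dmin / 2 -> Sx t -> Sx t' -> (forall a, Sx a -> g a <= g t') ->
  (forall a, Sx a -> `|g a - f a| < dl) ->
  (Dmin%:E <= (f t)%:E - ereal_sup [set y | exists a, [/\ Sx a, a <> t & y = (f a)%:E]])%E ->
  t' = t.
Proof.
move=> dlD St St' gmax close gap.
apply: contrapT => ne.
have ub : ((f t')%:E <= ereal_sup [set y | exists a, [/\ Sx a, a <> t & y = (f a)%:E]])%E.
  by apply: ereal_sup_ubound; exists t'.
have : (Dmin%:E <= (f t)%:E - (f t')%:E)%E.
  apply: le_trans gap _; apply: leeB => //.
rewrite -EFinB lee_fin => h.
have h1 := gmax t St.
have h2 := close t St; have h3 := close t' St'.
move: h2 h3; rewrite !ltr_norml => /andP[h2 h2'] /andP[h3 h3'].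
lra.
Qed.

Lemma Phi_le (R : realType) K (K0 : (0 < K)%N) (u w : nat -> R) B :
  (forall k, (k < K)%N -> `|w k| <= B) -> @Phi R K u w <= `|lse K (fun _ => 0)| + 2 * B.
Proof.
move=> H; rewrite (@PhiE _ _ K0).
have l1 : lse K w <= lse K (fun _ => 0) + B.
  apply: (@lse_le _ _ K0) => k kK; rewrite add0r; have := H k kK; rewrite ler_norml => /andP[]; lra.
have l2 : `|\sum_(k < K) softmax K u k * w k| <= B.
  apply: le_trans (ler_norm_sum _ _ _) _.
  apply: le_trans (_ : \sum_(k < K) softmax K u k * B <= B).
    apply: ler_sum => k _; rewrite normrM ger0_norm ?(@softmax_ge0 _ _ K0) //.
    by apply: ler_wpM2l; [exact: (@softmax_ge0 _ _ K0)|exact: H].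
  by rewrite -mulr_suml (@sum_softmax _ _ K0) mul1r.
have l3 := ler_norm (lse K (fun _ : nat => 0 : R)).
move: l2; rewrite ler_norml => /andP[l2 l2']; lra.
Qed.

Local Close Scope ereal_scope.
Theorem lemma13 (R : realType) (dX : measure_display) (X : measurableType dX)
  (d0 : probability X R)
  (A : pseudoPMetricType R)
  (A_hausdorff : hausdorff_space A)
  (A_separable : exists D : set A, countable D /\ dense D)
  (pi0 : R.-pker X ~> borelT A)
  (tb : (X -> A -> R) -> X -> A)
  (P : Type) (Rp : P -> X -> A -> R)
  (K : nat) (K_ge2 : (2 <= K)%N) :
  let S := fun x => tsupp (pi0 x) in
  (* each R_p is a measurable reward *)
  (forall p, measurable_fun setT
      (fun z : X * borelT A => Rp p z.1 z.2)) ->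
  (* each R_p is pi0-centered *)
  (forall p x, (\int[pi0 x]_(a in setT) (Rp p x a)%:E = 0)%E) ->
  (* each R_p has finite ||.||_{infty, supp(pi0)} norm *)
  (forall p, (supnorm S (Rp p) < +oo)%E) ->
  (* the fixed tie-breaking rule on F_P *)
  (forall p, measurable_fun setT (tb (Rp p) : X -> borelT A) /\
     forall x, S x (tb (Rp p) x) /\
       forall a, S x a -> Rp p x a <= Rp p x (tb (Rp p) x)) ->
  (* (C1) *)
  supcompact S (range Rp) ->
  (forall p, {ae d0, forall x, {within S x, continuous (Rp p x)}}) ->
  (* (C2) *)
  (exists2 Dmin : R, 0 < Dmin & forall p, {ae d0, forall x,
     (forall a, S x a -> a <> tb (Rp p) x -> Rp p x a < Rp p x (tb (Rp p) x)) /\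
     (Dmin%:E <= (Rp p x (tb (Rp p) x))%:E -
        ereal_sup [set y | exists a, [/\ S x a, a <> tb (Rp p) x &
                                         y = (Rp p x a)%:E]])%E}) ->
  (* continuity on F_P^2 (product topology of the sup-pseudometric) *)
  (forall ps p : P, forall e : R, 0 < e -> exists2 delta : R, 0 < delta &
     forall qs q : P,
       (supnorm S (fsub (Rp qs) (Rp ps)) < delta%:E)%E ->
       (supnorm S (fsub (Rp q) (Rp p)) < delta%:E)%E ->
       `| fine (Gap d0 tb (Rp qs) (Rp q)) - fine (Gap d0 tb (Rp ps) (Rp p)) | < e)
  /\
  (forall ps p : P, forall e : R, 0 < e -> exists2 delta : R, 0 < delta &
     forall qs q : P,
       (supnorm S (fsub (Rp qs) (Rp ps)) < delta%:E)%E ->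
       (supnorm S (fsub (Rp q) (Rp p)) < delta%:E)%E ->
       `| (fine (Lrisk d0 pi0 K (Rp qs) (Rp q)) - fine (Lrisk d0 pi0 K (Rp qs) (Rp qs)))
        - (fine (Lrisk d0 pi0 K (Rp ps) (Rp p)) - fine (Lrisk d0 pi0 K (Rp ps) (Rp ps))) | < e).
Proof.
move=> S mR cent fin tbH comp cont [Dmin Dmin0 C2].
have K0 : (0 < K)%N by apply: leq_trans K_ge2.
pose M p := fine (supnorm S (Rp p)).
have HM p x a : S x a -> `|Rp p x a| <= M p.
  by move=> Sxa; exact: (@supnorm_le _ _ _ _ S (Rp p) x a (fin p) Sxa).
have close q p dl x a : (supnorm S (fsub (Rp q) (Rp p)) < dl%:E)%E -> S x a ->
    `|Rp q x a - Rp p x a| < dl.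
  by move=> H Sxa; exact: (@supnorm_lt _ _ _ _ S (fsub (Rp q) (Rp p)) dl x a H Sxa).
have FF := @ae_filter_ringOfSetsType _ _ R d0.
split.
  move=> ps p e e0.
  pose dl := Num.min (Dmin / 2) (Num.min 1 (e / 4)).
  have dl0 : 0 < dl by rewrite !lt_min divr_gt0 //= ltr01 divr_gt0.
  have [dlD dl1 dle] : [/\ dl <= Dmin / 2, dl <= 1 & dl <= e / 4].
    by split; rewrite /dl !ge_min lexx ?orbT.
  exists dl => // qs q Hqs Hq.
  pose g s f x := ((Rp s x (tb (Rp s) x) - Rp s x (tb (Rp f) x))%:E : \bar R).
  have mg s f : measurable_fun setT (g s f).
    apply/measurable_EFinP; apply: measurable_funB.
      exact: (measurableT_comp (mR s) (measurable_fun_pair (@measurable_id _ X setT) (tbH s).1)).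
    exact: (measurableT_comp (mR s) (measurable_fun_pair (@measurable_id _ X setT) (tbH f).1)).
  have g0 s f x : (0 <= g s f x)%E.
    by rewrite lee_fin subr_ge0; apply: ((tbH s).2 x).2; exact: ((tbH f).2 x).1.
  have gC s f x : (forall a, S x a -> `|Rp s x a| <= `|M ps| + 1) ->
      (g s f x <= (2 * (`|M ps| + 1))%:E)%E.
    move=> B; rewrite lee_fin.
    have := B _ ((tbH s).2 x).1; have := B _ ((tbH f).2 x).1.
    rewrite !ler_norml => /andP[? ?] /andP[? ?]; lra.
  have Bps x a : S x a -> `|Rp ps x a| <= `|M ps| + 1.
    by move=> Sxa; have := HM ps x a Sxa; have := ler_norm (M ps); lra.
  have Bqs x a : S x a -> `|Rp qs x a| <= `|M ps| + 1.
    move=> Sxa; have := HM ps x a Sxa; have := ler_norm (M ps).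
    have := close qs ps dl x a Hqs Sxa.
    have := ler_normD (Rp qs x a - Rp ps x a) (Rp ps x a); rewrite subrK; lra.
  have aeg : {ae d0, forall x, (g qs q x <= g ps p x + (2 * dl)%:E)%E /\
                               (g ps p x <= g qs q x + (2 * dl)%:E)%E}.
    apply: (filterS2 _ _ (C2 p) (C2 ps)) => x [_ gp] [_ gps].
    have e1 : tb (Rp q) x = tb (Rp p) x.
      apply: (@tb_same _ _ (S x) (Rp p x) (Rp q x) _ _ dl Dmin dlD) => //.
      - exact: ((tbH p).2 x).1.
      - exact: ((tbH q).2 x).1.
      - exact: ((tbH q).2 x).2.
      - by move=> a Sxa; exact: close q p dl x a Hq Sxa.
    have e2 : tb (Rp qs) x = tb (Rp ps) x.
      apply: (@tb_same _ _ (S x) (Rp ps x) (Rp qs x) _ _ dl Dmin dlD) => //.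
      - exact: ((tbH ps).2 x).1.
      - exact: ((tbH qs).2 x).1.
      - exact: ((tbH qs).2 x).2.
      - by move=> a Sxa; exact: close qs ps dl x a Hqs Sxa.
    rewrite /g e1 e2 -!EFinD !lee_fin.
    have := close qs ps dl x _ Hqs ((tbH ps).2 x).1.
    have := close qs ps dl x _ Hqs ((tbH p).2 x).1.
    rewrite !ltr_norml => /andP[? ?] /andP[? ?]; split; lra.
  have H := @int_close _ _ _ d0 (g qs q) (g ps p) (2 * (`|M ps| + 1)) (2 * dl)
    (mg qs q) (mg ps p) (g0 qs q) (g0 ps p) (fun x => gC qs q x (Bqs x))
    (fun x => gC ps p x (Bps x)) (ltW (mulr_gt0 (ltr0Sn _ 1) dl0)).
  have ae1 : {ae d0, forall x, (g qs q x <= g ps p x + (2 * dl)%:E)%E}.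
    by move: aeg; apply: filterS => x [].
  have ae2 : {ae d0, forall x, (g ps p x <= g qs q x + (2 * dl)%:E)%E}.
    by move: aeg; apply: filterS => x [].
  have := H ae1 ae2.
  rewrite /Gap => /le_lt_trans; apply; lra.
move=> ps p e e0.
pose MM := `|M p| + `|M ps|.
have MM0 : 0 <= MM by rewrite addr_ge0.
have den0 : 0 < 4 * (4 + 8 * MM) by rewrite mulr_gt0 // ltr_wpDr ?mulr_ge0.
pose dl := Num.min (1 / 4) (e / (4 * (4 + 8 * MM))).
have dl0 : 0 < dl by rewrite lt_min divr_gt0 //= divr_gt0.
have [dl1 dle] : dl <= 1 / 4 /\ dl <= e / (4 * (4 + 8 * MM)).
  by split; rewrite /dl ge_min lexx ?orbT.
exists dl => // qs q Hqs Hq.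
pose h s f (x : X) (l : seq A) := ((@Phi R K (vR (Rp s) x l) (vR (Rp f) x l))%:E : \bar R).
pose F s f x := iint K (pi0 x) (h s f x).
have h0 s f x l : (0 <= h s f x l)%E.
  rewrite lee_fin; apply: sumr_ge0 => k _; apply: mulr_ge0.
    exact: (@softmax_ge0 _ _ K0).
  exact: loss_ge0.
have goodh s f : Good K (h s f).
  have := @goodH R A dX X (h s f) _ K _ X id (fun _ => [::]) 0%N (fun _ => erefl)
    (@measurable_id _ X setT) (fun k => measurable_cst _).
  apply.
  move=> d' Z xz pre mxz mpre; apply/measurable_EFinP.
  have mu k : measurable_fun [set: Z] (fun z => Rp s (xz z) (nth point (pre z) k)).
    exact: (measurableT_comp (mR s) (measurable_fun_pair mxz (mpre k))).
  have mw k : measurable_fun [set: Z] (fun z => Rp f (xz z) (nth point (pre z) k)).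
    exact: (measurableT_comp (mR f) (measurable_fun_pair mxz (mpre k))).
  exact: (@meas_comb R _ Z K K0 _ _ mu mw).
have mF s f : measurable_fun setT (F s f).
  exact: (@iint_meas R A K _ X pi0 (h s f) (h0 s f) (goodh s f)).
have Sae x : {ae pi0 x, forall a, S x a} by exact: supp_ae.
have Fle s f s' f' c : 0 <= c ->
    (forall x l, size l = K -> allin (S x) l -> (h s f x l <= h s' f' x l + c%:E)%E) ->
    forall x, (F s f x <= F s' f' x + c%:E)%E.
  move=> c0 Hc x.
  exact: (@iint_le R A K _ X pi0 S (h s f) (h s' f') c c0 Sae (h0 s f) (h0 s' f')
    (goodh s f) (goodh s' f') x (Hc x)).
pose C := `|lse K (fun _ => 0 : R)| + 2 * (MM + 1).
have C0 : 0 <= C by rewrite addr_ge0 // mulr_ge0 // addr_ge0.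
have FC s f : (forall x a, S x a -> `|Rp f x a| <= MM + 1) -> forall x, (F s f x <= C%:E)%E.
  move=> B x.
  have := @iint_le R A K _ X pi0 S (h s f) (fun _ _ => 0%E) C C0 Sae (h0 s f)
    (fun _ _ => lexx _) (goodh s f) (Good0 _ _ _ _ _) x.
  rewrite iint0 add0e; apply => l sz Sl; rewrite lee_fin.
  apply: (@Phi_le _ _ K0) => k kK; apply: B.
  by apply: allin_nth => //; rewrite sz.
have Bp0 x a : S x a -> `|Rp p x a| <= MM.
  by move=> Sxa; have := HM p x a Sxa; have := ler_norm (M p); rewrite /MM; have := normr_ge0 (M ps); lra.
have Bps0 x a : S x a -> `|Rp ps x a| <= MM.
  by move=> Sxa; have := HM ps x a Sxa; have := ler_norm (M ps); rewrite /MM; have := normr_ge0 (M p); lra.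
have Bp x a : S x a -> `|Rp p x a| <= MM + 1.
  by move=> Sxa; have := Bp0 x a Sxa; lra.
have Bps x a : S x a -> `|Rp ps x a| <= MM + 1.
  by move=> Sxa; have := Bps0 x a Sxa; lra.
have Bq x a : S x a -> `|Rp q x a| <= MM + 1.
  move=> Sxa; have := Bp0 x a Sxa; have := close q p dl x a Hq Sxa.
  have := ler_normD (Rp q x a - Rp p x a) (Rp p x a); rewrite subrK; lra.
have Bqs x a : S x a -> `|Rp qs x a| <= MM + 1.
  move=> Sxa; have := Bps0 x a Sxa; have := close qs ps dl x a Hqs Sxa.
  have := ler_normD (Rp qs x a - Rp ps x a) (Rp ps x a); rewrite subrK; lra.
pose c := dl * (4 + 8 * MM).
have c0 : 0 <= c by rewrite /c; apply: mulr_ge0; [exact: ltW|lra].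
have hclose s f s' f' : (forall x a, S x a -> `|Rp s' x a - Rp s x a| < dl) ->
    (forall x a, S x a -> `|Rp f' x a - Rp f x a| < dl) ->
    (forall x a, S x a -> `|Rp f x a| <= MM) ->
    forall x l, size l = K -> allin (S x) l ->
    (h s' f' x l <= h s f x l + c%:E)%E /\ (h s f x l <= h s' f' x l + c%:E)%E.
  move=> Hs Hf Hb x l sz Sl.
  have Sn k : (k < K)%N -> S x (nth point l k) by move=> kK; apply: allin_nth; rewrite ?sz.
  have := @Phi_close R K K0 (vR (Rp s) x l) (vR (Rp s') x l) (vR (Rp f) x l) (vR (Rp f') x l)
    dl MM (ltW dl0) dl1 (fun k kK => ltW (Hs x _ (Sn k kK)))
    (fun k kK => ltW (Hf x _ (Sn k kK))) (fun k kK => Hb x _ (Sn k kK)).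
  rewrite /h -!EFinD !lee_fin ler_norml => /andP[? ?]; rewrite /c; split; lra.
have cl1 := hclose ps p qs q (fun x a => close qs ps dl x a Hqs) (fun x a => close q p dl x a Hq)
   Bp0.
have cl2 := hclose ps ps qs qs (fun x a => close qs ps dl x a Hqs) (fun x a => close qs ps dl x a Hqs)
   Bps0.
have I1 := @int_close _ _ _ d0 (F qs q) (F ps p) C c (mF qs q) (mF ps p)
  (fun x => @iint_ge0 _ _ K _ _ (h0 qs q x)) (fun x => @iint_ge0 _ _ K _ _ (h0 ps p x))
  (FC qs q Bq) (FC ps p Bp) c0
  (aeW _ (Fle _ _ _ _ c c0 (fun x l sz Sl => (cl1 x l sz Sl).1)))
  (aeW _ (Fle _ _ _ _ c c0 (fun x l sz Sl => (cl1 x l sz Sl).2))).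
have I2 := @int_close _ _ _ d0 (F qs qs) (F ps ps) C c (mF qs qs) (mF ps ps)
  (fun x => @iint_ge0 _ _ K _ _ (h0 qs qs x)) (fun x => @iint_ge0 _ _ K _ _ (h0 ps ps x))
  (FC qs qs Bqs) (FC ps ps Bps) c0
  (aeW _ (Fle _ _ _ _ c c0 (fun x l sz Sl => (cl2 x l sz Sl).1)))
  (aeW _ (Fle _ _ _ _ c c0 (fun x l sz Sl => (cl2 x l sz Sl).2))).
have ce : c <= e / 4.
  have : dl * (4 * (4 + 8 * MM)) <= e by rewrite -ler_pdivlMr.
  rewrite /c; lra.
rewrite /Lrisk.
move: I1 I2; rewrite /F /h /Phi.
rewrite !ler_norml => /andP[? ?] /andP[? ?].
rewrite ltr_norml; apply/andP; split; lra.
Qed.
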